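(* Let $\ell,d$ be positive integers and $p=p_1\cdots p_\ell\in\mathbb{Z}_d^\ell$. The descending dipaths of the cyclic permutation routing $R(p_1\cdots p_\ell)$ in $\mathcal{B}(\ell,d)$ are pairwise arc-disjoint: no arc of $\mathcal{B}(\ell,d)$ is contained in two of them.
   Context: The BCube $\mathcal{B}(\ell,d)$ ($\ell,d$ positive integers) is the symmetric digraph defined as follows, with $\mathbb{Z}_d=\{0,1,\dots,d-1\}$. - Hosts: all vectors $\mathbf{h}=h_1\cdots h_\ell\in\mathbb{Z}_d^{\ell}$. - Switches: for each layer $k\in\{1,\dots,\ell\}$, one switch $\mathbf{s}^k$ for each vector $s^k_1\cdots s^k_{\ell-1}\in\mathbb{Z}_d^{\ell-1}$. - Links: host $\mathbf{h}$ and layer-$k$ switch $\mathbf{s}^k$ are joined if and only if $s^k_1\cdots s^k_{\ell-1}=h_1\cdots h_{k-1}h_{k+1}\cdots h_\ell$. Each such link gives an uplink arc (host $\to$ switch) and a downlink arc (switch $\to$ host) at layer $k$. Descending dipath: let $\mathbf{h}^s\neq\mathbf{h}^d$ be hosts, and let $i_1>\dots>i_m$ be the coordinates in which they differ. Define $\mathbf{h}^0=\mathbf{h}^s$, and let $\mathbf{h}^j$ be $\mathbf{h}^{j-1}$ with its $i_j$-th coordinate replaced by $h^d_{i_j}$. The descending dipath goes, for each $j=1,\dots,m$, from $\mathbf{h}^{j-1}$ through the unique layer-$i_j$ switch adjacent to both $\mathbf{h}^{j-1}$ and $\mathbf{h}^j$, to $\mathbf{h}^j$. When $\mathbf{h}^s=\mathbf{h}^d$,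 the dipath is the trivial path with no arcs. For $p\in\mathbb{Z}_d^\ell$, the permutation $P(p)$ is the set of pairs $(\mathbf{h}^s,\mathbf{h}^d)$ with $\mathbf{h}^s\in\mathbb{Z}_d^\ell$ and $h^d_i=(h^s_i+p_i)\bmod d$ for all $i$. The cyclic permutation routing $R(p)$ is the set of descending dipaths $P_{\mathbf{h}^s,\mathbf{h}^d}$ for $(\mathbf{h}^s,\mathbf{h}^d)\in P(p)$. *)

(* Defs.v *)
(* BCube B(l,d): coordinates indexed by 'I_l (0-based:
   paper coordinate i corresponds to ordinal i-1), Z_d is 'I_d. *)
From mathcomp Require Import all_boot.
Set Implicit Arguments. Unset Strict Implicit. Unset Printing Implicit Defensive.

Definition host (l d : nat) := {ffun 'I_l -> 'I_d}.

Definition switch (l d : nat) := ('I_l * {ffun 'I_l.-1 -> 'I_d})%type.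

Definition bc_arc (l d : nat) := ((host l d * switch l d) + (switch l d * host l d))%type.
Definition uplink l d (h : host l d) (s : switch l d) : bc_arc l d := inl (h, s).
Definition downlink l d (s : switch l d) (h : host l d) : bc_arc l d := inr (s, h).

Lemma bump_lt l (k : 'I_l) (j : 'I_l.-1) : bump k j < l.
Proof.
case: l k j => [[]//|n] k j /=. rewrite /bump.
case: (k <= j); rewrite ?add1n ?add0n /= ?ltnS; [exact: ltn_ord | exact: ltnW].
Qed.

Definition delete_coord l d (k : 'I_l) (h : host l d) : {ffun 'I_l.-1 -> 'I_d} :=
  [ffun j => h (Ordinal (bump_lt k j))].

Definition linked l d (h : host l d) (s : switch l d) : Prop :=
  s.2 = delete_coord s.1 h.

Definition is_arc l d (a : bc_arc l d) : Prop :=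
  match a with
  | inl (h, s) => linked h s
  | inr (s, h) => linked h s
  end.

Definition set_coord l d (h hd : host l d) (i : 'I_l) : host l d :=
  [ffun j => if j == i then hd j else h j].

(* the switch of layer i adjacent to h (and to set_coord h hd i) *)
Definition layer_switch l d (i : 'I_l) (h : host l d) : switch l d :=
  (i, delete_coord i h).

Fixpoint dpath_aux l d (hd h : host l d) (cs : seq 'I_l) : seq (bc_arc l d) :=
  match cs with
  | [::] => [::]
  | i :: cs' =>
      let h' := set_coord h hd i in
      uplink h (layer_switch i h) :: downlink (layer_switch i h) h'
        :: dpath_aux hd h' cs'
  end.

Definition diff_coords l d (hs hd : host l d) : seq 'I_l :=
  [seq i <- rev (enum 'I_l) | hs i != hd i].

Definition descending_dipath l d (hs hd : host l d) : seq (bc_arc l d) :=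
  dpath_aux hd hs (diff_coords hs hd).

Definition cyc_dest l d (p hs : host l d) (hd : host l d) : Prop :=
  forall i, val (hd i) = (val (hs i) + val (p i)) %% d.

(* Main.v *)
Require Import Defs.
From mathcomp Require Import all_boot.
From mathcomp Require Import zify.

Section Aux.
Variables (l d : nat).

Definition mid (hs hd : host l d) (i : 'I_l) : host l d :=
  [ffun k : 'I_l => if k <= i then hs k else hd k].

Lemma aux (hs hd : host l d) : forall (cs : seq 'I_l) (h : host l d),
  sorted (fun x y : 'I_l => y < x) cs ->
  (forall k, h k = if has (fun c : 'I_l => k <= c) cs then hs k else hd k) ->
  (forall k, hs k != hd k -> has (fun c : 'I_l => k <= c) cs -> k \in cs) ->
  forall a, a \in dpath_aux hd h cs -> exists i : 'I_l,
    a = uplink (mid hs hd i) (layer_switch i (mid hs hd i)) \/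
    a = downlink (layer_switch i (mid hs hd i)) (set_coord (mid hs hd i) hd i).
Proof.
elim=> [|i cs IH] h Hs Hh Hd a //=.
have Hall : all (fun c : 'I_l => c < i) cs.
  by apply: (order_path_min _ Hs) => x y z /= H1 H2; lia.
have Hmid : h = mid hs hd i.
  apply/ffunP => k; rewrite Hh ffunE /=.
  case: (leqP k i) => //= Hik.
  have -> : has (fun c : 'I_l => k <= c) cs = false.
    apply/hasP => [[c Hc Hkc]]; have := allP Hall c Hc => /= Hci; lia.
  by [].
rewrite !in_cons => /orP [/eqP->|/orP[/eqP->|Ha]].
- by exists i; left; rewrite Hmid.
- by exists i; right; rewrite Hmid.
apply: (IH _ (path_sorted Hs)) Ha.
- move=> k; rewrite ffunE Hh /=.
  case: eqP => [->|Hki].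
  + have -> : has (fun c : 'I_l => i <= c) cs = false.
      apply/hasP => [[c Hc Hkc]]; have := allP Hall c Hc => /= Hci; lia.
    by [].
  case Hh': (has _ cs); first by rewrite orbT.
  rewrite orbF; case: leqP => // Hki'.
  case: (boolP (hs k != hd k)) => [Hne|]; last by rewrite negbK => /eqP.
  have := Hd k Hne; rewrite /= Hki' in_cons => /(_ isT) /orP [/eqP//|Hk].
  exfalso; move/negbT/hasPn: Hh' => /(_ k Hk); rewrite leqnn.
  by [].
- move=> k Hne Hh'.
  have := Hd k Hne; rewrite /= Hh' orbT in_cons => /(_ isT) /orP [/eqP Hk|//].
  subst k; case/hasP: Hh' => c Hc Hkc; have := allP Hall c Hc => /= Hci; lia.
Qed.

Lemma desc_mem (hs hd : host l d) a : a \in descending_dipath hs hd ->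
  exists i : 'I_l,
    a = uplink (mid hs hd i) (layer_switch i (mid hs hd i)) \/
    a = downlink (layer_switch i (mid hs hd i)) (set_coord (mid hs hd i) hd i).
Proof.
apply: aux.
- rewrite /diff_coords; apply: sorted_filter; first by move=> x y z /= H1 H2; lia.
  rewrite rev_sorted.
  have := iota_ltn_sorted 0 l; rewrite -val_enum_ord sorted_map.
  by apply: sub_sorted.
- move=> k; case: ifP => // /negbT Hn; apply/eqP; apply/negPn/negP => Hne.
  move/hasPn: Hn => /(_ k); rewrite leqnn /diff_coords mem_filter mem_rev mem_enum Hne.
  by move=> /(_ isT).
- by move=> k Hne _; rewrite /diff_coords mem_filter mem_rev mem_enum Hne.
Qed.
End Aux.

Lemma cyc_inj (d : nat) (a b c : 'I_d) :
  (a + c) %% d = (b + c) %% d -> a = b.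
Proof.
move=> H; apply/val_inj/eqP.
have := eqn_modDr c a b d; rewrite H eqxx !modn_small //.
Qed.

Theorem lemma3 (l d : nat) (hl : 0 < l) (hdp : 0 < d) (p : host l d)
  (hs1 hd1 hs2 hd2 : host l d) :
  cyc_dest p hs1 hd1 -> cyc_dest p hs2 hd2 ->
  (hs1, hd1) <> (hs2, hd2) ->
  forall a : bc_arc l d, is_arc a ->
    ~ (a \in descending_dipath hs1 hd1 /\ a \in descending_dipath hs2 hd2).
Proof.
move=> C1 C2 Hne a _ [/desc_mem [i1 H1] /desc_mem [i2 H2]].
suff Hs : hs1 = hs2.
  apply: Hne; congr pair => //; apply/ffunP => k; apply/val_inj.
  by rewrite C1 C2 Hs.
suff Hk : forall k, hs1 k = hs2 k \/ hd1 k = hd2 k.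
  apply/ffunP => k; case: (Hk k) => // Heq.
  apply: (@cyc_inj _ _ _ (p k)); by rewrite -C1 -C2 Heq.
move=> k.
case: H1 H2 => -> [] // [].
- move=> Hm Hi _; subst i2; move/ffunP: Hm => /(_ k); rewrite !ffunE.
  by case: leqP => _ ->; auto.
- move=> Hi _; subst i2; move/ffunP => /(_ k); rewrite !ffunE.
  case: eqP => _; first by auto.
  case: leqP => _; auto.
Qed.
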